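(* Let $q_0$ be a probability distribution on $\mathcal X_1$ and, for each $h<H$ and $(x_h,a_h)\in\mathcal A(\mathcal X_h)$, let $q_h(\cdot|x_h,a_h)$ be a probability distribution on $\mathcal X_{h+1}(x_h,a_h)$; set $q_{1:h}(x_h)=q_0(x_1)\prod_{h'=1}^{h-1}q_{h'}(x_{h'+1}|x_{h'},a_{h'})$ along the history of $x_h$. Then $$\sum_{h=1}^H\sum_{x_h\in\mathcal X_h}A(x_h)\frac{q_{1:h}(x_h)}{p^\star_{1:h}(x_h)}=A_{\mathcal X}.$$ Moreover, if $A(x)=A$ for all $x\in\mathcal X$, then for every $h\in[H]$, $$\sum_{x_h\in\mathcal X_h}A(x_h)\frac{q_{1:h}(x_h)}{p^\star_{1:h}(x_h)}\le A^{h-H}A_{\mathcal X}.$$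
   Context: The max-player's information sets form a finite set $\mathcal X=\bigsqcup_{h=1}^H\mathcal X_h$ with perfect recall: each $x_h\in\mathcal X_h$ has a unique history $(x_1,a_1,\dots,x_{h-1},a_{h-1},x_h)$ with $x_i\in\mathcal X_i$, $a_i\in\mathcal A(x_i)$, where $\mathcal A(x)$ is a finite nonempty action set of size $A(x)$. For $h<H$, $\mathcal X_{h+1}(x_h,a_h)$ is the set of $x_{h+1}\in\mathcal X_{h+1}$ whose history contains $(x_h,a_h)$, assumed nonempty. $\mathcal A(\mathcal X_h)=\{(x_h,a_h):x_h\in\mathcal X_h,a_h\in\mathcal A(x_h)\}$, $A_{\mathcal X}=\sum_{x\in\mathcal X}A(x)$. Write $x'\ge x$ if $x'=x$ or $x$ appears in the history of $x'$. Balanced transitions: $A^\tau(x)=\sum_{x'\ge x}A(x')$; $p^\star_0(x_1)=A^\tau(x_1)/A_{\mathcal X}$ for $x_1\in\mathcal X_1$; $p^\star_h(x_{h+1}|x_h,a_h)=A^\tau(x_{h+1})/\sum_{x'\in\mathcal X_{h+1}(x_h,a_h)}A^\tau(x')$; $p^\star_{1:h}(x_h)=p^\star_0(x_1)\prod_{h'=1}^{h-1}p^\star_{h'}(x_{h'+1}|x_{h'},a_{h'})$ along the history of $x_h$. *)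

(* Defs.v *)
From HB Require Import structures.
From mathcomp Require Import all_boot all_order all_algebra.
Set Implicit Arguments. Unset Strict Implicit. Unset Printing Implicit Defensive.
Import Order.TTheory GRing.Theory Num.Theory.
Local Open Scope ring_scope.

(* X : finite type of information sets; lvl x = h means x \in X_h;
   Aset x : the (finite) action set A(x), a subset of a global finite type Act;
   par x = None if x is at level 1, and par x = Some (y, a) if the history
   of x ends with (y, a), i.e. x \in X_{h+1}(y, a).  *)

Definition nA (X Act : finType) (Aset : X -> {set Act}) (x : X) : nat :=
  #|Aset x|.

Definition AX (X Act : finType) (Aset : X -> {set Act}) : nat :=
  (\sum_(x : X) nA Aset x)%N.

Fixpoint anc (X Act : finType) (par : X -> option (X * Act)) (k : nat) (x : X)
  : option X :=
  match k with
  | 0 => Some x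
  | k'.+1 => obind (fun y => omap fst (par y)) (anc par k' x)
  end.

Definition desc (X Act : finType) (par : X -> option (X * Act)) (x x' : X) : bool :=
  [exists k : 'I_#|X|.+1, anc par k x' == Some x].

Definition Atau (X Act : finType) (Aset : X -> {set Act})
  (par : X -> option (X * Act)) (x : X) : nat :=
  (\sum_(x' | desc par x x') nA Aset x')%N.

Fixpoint path_prob (R : ringType) (X Act : finType) (par : X -> option (X * Act))
  (p0 : X -> R) (p : X -> Act -> X -> R) (n : nat) (x : X) : R :=
  match n with
  | 0 => 0
  | n'.+1 => match par x with
             | None => p0 x
             | Some (y, a) => p y a x * path_prob par p0 p n' y
             end
  end.

(* p_{1:h}(x_h) = p_0(x_1) prod_{h'} p_{h'}(x_{h'+1} | x_{h'}, a_{h'}),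
   h = lvl x (fuel lvl x suffices since the history has lvl x nodes) *)
Definition reach (R : ringType) (X Act : finType) (lvl : X -> nat)
  (par : X -> option (X * Act)) (p0 : X -> R) (p : X -> Act -> X -> R) (x : X) : R :=
  path_prob par p0 p (lvl x) x.

Definition pstar0 (R : fieldType) (X Act : finType) (Aset : X -> {set Act})
  (par : X -> option (X * Act)) (x : X) : R :=
  (Atau Aset par x)%:R / (AX Aset)%:R.

Definition pstar (R : fieldType) (X Act : finType) (Aset : X -> {set Act})
  (par : X -> option (X * Act)) (y : X) (a : Act) (x : X) : R :=
  (Atau Aset par x)%:R /
    (\sum_(x' | par x' == Some (y, a)) (Atau Aset par x')%:R).

Definition pstar_reach (R : fieldType) (X Act : finType) (lvl : X -> nat)
  (Aset : X -> {set Act}) (par : X -> option (X * Act)) (x : X) : R :=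
  reach lvl par (@pstar0 R X Act Aset par) (@pstar R X Act Aset par) x.

(* Main.v *)
Require Import Defs.
From HB Require Import structures.
From mathcomp Require Import all_boot all_order all_algebra.
From mathcomp Require Import zify ring lra.
Set Implicit Arguments. Unset Strict Implicit.
Import Order.TTheory GRing.Theory Num.Theory.
Local Open Scope ring_scope.

Lemma anc_lvl (X Act : finType) (lvl : X -> nat) (par : X -> option (X * Act))
  (Hp : forall x y a, par x = Some (y, a) -> lvl x = (lvl y).+1) :
  forall k x' y, anc par k x' = Some y -> (lvl y + k)%N = lvl x'.
Proof.
elim=> [|k IH] x' y /=; first by case=> ->; rewrite addn0.
case E: (anc par k x') => [c|] //=.
case Ep: (par c) => [[y' a]|] //= [<-].
have := IH _ _ E; have := Hp _ _ _ Ep; lia.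
Qed.

Lemma anc_some (X Act : finType) (lvl : X -> nat) (par : X -> option (X * Act))
  (Hp : forall x y a, par x = Some (y, a) -> lvl x = (lvl y).+1)
  (Hroot : forall x, (par x == None) = (lvl x == 1%N)) :
  forall k x', (k < lvl x')%N -> exists y, anc par k x' = Some y.
Proof.
elim=> [|k IH] x' Hk /=; first by exists x'.
have [c Ec] := IH x' (ltnW Hk).
rewrite Ec /=.
have Hl := anc_lvl Hp Ec.
case Ep: (par c) => [[y a]|] /=; first by exists y.
move: (Hroot c); rewrite Ep eqxx => /esym/eqP; lia.
Qed.

Lemma lvl_card (X Act : finType) (lvl : X -> nat) (par : X -> option (X * Act))
  (Hp : forall x y a, par x = Some (y, a) -> lvl x = (lvl y).+1)
  (Hroot : forall x, (par x == None) = (lvl x == 1%N)) :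
  forall x', (lvl x' <= #|X|)%N.
Proof.
move=> x'.
pose f (i : 'I_(lvl x')) := odflt x' (anc par i x').
have inj : injective f.
  move=> i j; rewrite /f.
  have [yi Ei] := anc_some Hp Hroot (ltn_ord i).
  have [yj Ej] := anc_some Hp Hroot (ltn_ord j).
  rewrite Ei Ej /= => eij; subst yj.
  have := anc_lvl Hp Ei; have := anc_lvl Hp Ej => h1 h2.
  apply: val_inj => /=; lia.
by have := leq_card f inj; rewrite card_ord.
Qed.

Lemma descP (X Act : finType) (lvl : X -> nat) (par : X -> option (X * Act))
  (Hp : forall x y a, par x = Some (y, a) -> lvl x = (lvl y).+1)
  (Hroot : forall x, (par x == None) = (lvl x == 1%N))
  (Hl1 : forall x, (1 <= lvl x)%N) x x' :
  desc par x x' <-> exists k, anc par k x' = Some x.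
Proof.
split; first by case/existsP=> k /eqP E; exists k.
case=> k E; apply/existsP.
have Hk : (k < #|X|.+1)%N.
  have := anc_lvl Hp E; have := lvl_card Hp Hroot x'; have := Hl1 x; lia.
by exists (Ordinal Hk); rewrite E.
Qed.

Lemma desc_child (X Act : finType) (lvl : X -> nat) (par : X -> option (X * Act))
  (Hp : forall x y a, par x = Some (y, a) -> lvl x = (lvl y).+1)
  (Hroot : forall x, (par x == None) = (lvl x == 1%N))
  (Hl1 : forall x, (1 <= lvl x)%N) x x' :
  (desc par x x' && (x' != x)) =
  [exists c, (omap fst (par c) == Some x) && desc par c x'].
Proof.
apply/andP/existsP.
  case=> /(descP Hp Hroot Hl1) [[|j] /= E] ne; first by case: E ne => ->; rewrite eqxx.
  move: E; case E: (anc par j x') => [c|] //= Ec.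
  exists c; rewrite Ec eqxx /=; apply/(descP Hp Hroot Hl1); by exists j.
case=> c /andP [/eqP Ec /(descP Hp Hroot Hl1) [j Ej]].
have Hl := anc_lvl Hp Ej.
move: Ec; case Ep: (par c) => [[y a]|] //= [Ey]; subst y.
have := Hp _ _ _ Ep => Hlc.
split.
  apply/(descP Hp Hroot Hl1); exists j.+1 => /=; by rewrite Ej /= Ep.
apply/eqP => exx; subst x'; lia.
Qed.

Lemma desc_uniq (X Act : finType) (lvl : X -> nat) (par : X -> option (X * Act))
  (Hp : forall x y a, par x = Some (y, a) -> lvl x = (lvl y).+1)
  (Hroot : forall x, (par x == None) = (lvl x == 1%N))
  (Hl1 : forall x, (1 <= lvl x)%N) x x' c1 c2 :
  omap fst (par c1) = Some x -> omap fst (par c2) = Some x ->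
  desc par c1 x' -> desc par c2 x' -> c1 = c2.
Proof.
case E1: (par c1) => [[y1 a1]|] //= [?]; subst y1.
case E2: (par c2) => [[y2 a2]|] //= [?]; subst y2.
move=> /(descP Hp Hroot Hl1) [k1 F1] /(descP Hp Hroot Hl1) [k2 F2].
have := anc_lvl Hp F1; have := anc_lvl Hp F2.
have := Hp _ _ _ E1; have := Hp _ _ _ E2 => h1 h2 h3 h4.
have ek : k1 = k2 by lia.
by subst k2; move: F1; rewrite F2 => -[].
Qed.

Lemma sum_desc (R : nmodType) (X Act : finType) (lvl : X -> nat) (par : X -> option (X * Act))
  (Hp : forall x y a, par x = Some (y, a) -> lvl x = (lvl y).+1)
  (Hroot : forall x, (par x == None) = (lvl x == 1%N))
  (Hl1 : forall x, (1 <= lvl x)%N) (F : X -> R) x :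
  \sum_(x' | desc par x x') F x' =
  F x + \sum_(c | omap fst (par c) == Some x) \sum_(x' | desc par c x') F x'.
Proof.
rewrite (bigD1 x) /=; last by apply/(descP Hp Hroot Hl1); exists 0%N.
congr (_ + _).
rewrite (exchange_big_dep (fun x' => desc par x x' && (x' != x))) /=; last first.
  by move=> c x' Hc Hd; rewrite (desc_child Hp Hroot Hl1); apply/existsP; exists c; rewrite Hc.
apply: eq_bigr => x' Hx'.
move: (Hx'); rewrite (desc_child Hp Hroot Hl1) => /existsP [c0 /andP [Hc0 Hd0]].
rewrite (big_pred1 c0) // => c /=; apply/andP/eqP; last by move=> ->; split.
case=> /eqP Hc Hd; apply: (desc_uniq Hp Hroot Hl1 Hc _ Hd Hd0); exact/eqP.
Qed.

Lemma path_prob_ge0 (R : realFieldType) (X Act : finType) (par : X -> option (X * Act))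
  (p0 : X -> R) (p : X -> Act -> X -> R)
  (H0 : forall x, par x = None -> 0 <= p0 x)
  (H1 : forall x y a, par x = Some (y, a) -> 0 <= p y a x) :
  forall n x, 0 <= path_prob par p0 p n x.
Proof.
elim=> [|n IH] x /=; first by [].
case E: (par x) => [[y a]|]; last exact: H0.
by apply: mulr_ge0; [exact: H1 E | exact: IH].
Qed.

Lemma test (R : realFieldType) (a b c d e : R) : a != 0 ->
  a * ((b * c) / (a / d * e)) = b * d * (c / e).
Proof.
move=> ha. rewrite invfM invf_div.
transitivity ((a * a^-1) * (b * d * (c / e))); first by ring.
by rewrite mulfV // mul1r.
Qed.

Theorem mainTheorem7 (R : realFieldType) (X Act : finType) (H : nat)
  (lvl : X -> nat) (Aset : X -> {set Act}) (par : X -> option (X * Act))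
  (* tree structure with perfect recall *)
  (Hlvl : forall x, (1 <= lvl x <= H)%N)
  (Hroot : forall x, (par x == None) = (lvl x == 1%N))
  (Hpar : forall x y a, par x = Some (y, a) ->
            a \in Aset y /\ lvl x = (lvl y).+1)
  (HAne : forall x, Aset x != set0)
  (Hchild : forall y a, (lvl y < H)%N -> a \in Aset y ->
            exists x, par x = Some (y, a))
  (* the transitions q *)
  (q0 : X -> R) (q : X -> Act -> X -> R)
  (Hq0 : (forall x, lvl x = 1%N -> 0 <= q0 x) /\
         \sum_(x | lvl x == 1%N) q0 x = 1)
  (Hq : forall y a, (lvl y < H)%N -> a \in Aset y ->
         (forall x, par x = Some (y, a) -> 0 <= q y a x) /\
         \sum_(x | par x == Some (y, a)) q y a x = 1) :
  \sum_(1 <= h < H.+1) \sum_(x | lvl x == h)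
      (nA Aset x)%:R * (reach lvl par q0 q x / pstar_reach R lvl Aset par x)
    = (AX Aset)%:R
  /\
  (forall A : nat, (forall x, nA Aset x = A) ->
   forall h : nat, (1 <= h <= H)%N ->
     \sum_(x | lvl x == h)
        (nA Aset x)%:R * (reach lvl par q0 q x / pstar_reach R lvl Aset par x)
       <= (A%:R ^- (H - h)%N) * (AX Aset)%:R).
Proof.
have Hp x y a : par x = Some (y, a) -> lvl x = (lvl y).+1 by move/Hpar=> [].
have Hl1 x : (1 <= lvl x)%N by case/andP: (Hlvl x).
have HlH x : (lvl x <= H)%N by case/andP: (Hlvl x).
pose At x : R := (Atau Aset par x)%:R.
pose r x := reach lvl par q0 q x / pstar_reach R lvl Aset par x.
have AtE x : At x = (nA Aset x)%:R + \sum_(c | omap fst (par c) == Some x) At c.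
  rewrite /At /Atau natr_sum (sum_desc Hp Hroot Hl1); congr (_ + _).
  by apply: eq_bigr => c _; rewrite natr_sum.
have nA_gt0 x : (0 < nA Aset x)%N by rewrite /nA card_gt0.
have At_ge x : (nA Aset x)%:R <= At x.
  rewrite AtE lerDl; apply: sumr_ge0 => c _; exact: ler0n.
have At_neq0 x : At x != 0.
  rewrite gt_eqF //; apply: lt_le_trans (At_ge x); by rewrite ltr0n.
have chA (G : X -> R) x : \sum_(c | omap fst (par c) == Some x) G c =
    \sum_(a in Aset x) \sum_(c | par c == Some (x, a)) G c.
  rewrite (exchange_big_dep (fun c => omap fst (par c) == Some x)) /=; last first.
    by move=> a c _ /eqP ->.
  apply: eq_bigr => c /eqP Hc.
  move: Hc; case E: (par c) => [[y b]|] //= [Ey]; subst y.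
  have Hb := (Hpar _ _ _ E).1.
  rewrite (big_pred1 b) // => a /=.
  apply/andP/eqP; first by case=> _ /eqP [->].
  by move=> ->; split.
have reachC (p0 : X -> R) p c x a : par c = Some (x, a) ->
    reach lvl par p0 p c = p x a c * reach lvl par p0 p x.
  by move=> E; rewrite /reach (Hp _ _ _ E) /= E.
have reach1 (p0 : X -> R) p x : lvl x = 1%N -> reach lvl par p0 p x = p0 x.
  move=> E; rewrite /reach E /=.
  by move: (Hroot x); rewrite E eqxx => /eqP ->.
have node x : \sum_(c | omap fst (par c) == Some x) At c * r c =
              (\sum_(c | omap fst (par c) == Some x) At c) * r x.
  case: (ltnP (lvl x) H) => Hx; last first.
    have nc c : (omap fst (par c) == Some x) = false.
      apply/negbTE/eqP.
      case E: (par c) => [[y a]|] //= [Ey]; subst y.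
      have := Hp _ _ _ E; have := HlH c; lia.
    by rewrite !big_pred0 ?mul0r.
  rewrite (chA At x) big_distrl /=.
  have -> := chA (fun c => At c * r c) x; apply: eq_bigr => a Ha.
  have [Hq1 Hq2] := Hq x a Hx Ha.
  set S := \sum_(c | par c == Some (x, a)) At c.
  transitivity (\sum_(c | par c == Some (x, a)) q x a c * S * r x).
    apply: eq_bigr => c /eqP E.
    rewrite /r /pstar_reach !(reachC _ _ _ _ _ E) /pstar.
    exact: test.
  by rewrite -big_distrl -big_distrl /= Hq2 mul1r.
have nodeE x : At x * r x = (nA Aset x)%:R * r x +
     \sum_(c | omap fst (par c) == Some x) At c * r c.
  by rewrite node AtE mulrDl.
pose S h := \sum_(x | lvl x == h) At x * r x.
pose T h := \sum_(x | lvl x == h) (nA Aset x)%:R * r x.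
have step h : (1 <= h)%N -> S h = T h + S h.+1.
  move=> h1; rewrite /S /T.
  rewrite (eq_bigr _ (fun x _ => nodeE x)) big_split /=; congr (_ + _).
  pose pp c := odflt c (omap fst (par c)).
  rewrite [RHS](partition_big pp (fun x => lvl x == h)) /=; last first.
    move=> c /eqP Hc; rewrite /pp.
    case E: (par c) => [[y a]|] /=.
      by have := Hp _ _ _ E; rewrite Hc => -[->].
    by move: (Hroot c); rewrite E eqxx Hc => /esym/eqP; lia.
  apply: eq_bigr => x /eqP Hx; apply: eq_bigl => c /=; rewrite /pp.
  case E: (par c) => [[y a]|] /=; last first.
    by move: (Hroot c); rewrite E eqxx => /esym/eqP ->; rewrite (_ : (1 == h.+1)%N = false) //; apply/eqP; lia.
  have := Hp _ _ _ E => Hc.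
  apply/eqP/andP.
    by case=> Ey; subst y; rewrite Hc Hx !eqxx.
  by case=> _ /eqP ->.
have SH1 : S H.+2 = 0.
  by rewrite /S big_pred0 // => x; apply/negbTE; have := HlH x; lia.
have Ssum k : (k <= H)%N -> S (H.+1 - k)%N = \sum_(H.+1 - k <= i < H.+1) T i.
  elim: k => [|k IH] Hk.
    by rewrite subn0 big_geq // /S big_pred0 // => x; apply/negbTE; have := HlH x; lia.
  have e : (H.+1 - k = (H.+1 - k.+1).+1)%N by lia.
  rewrite (big_ltn (_ : (H.+1 - k.+1 < H.+1)%N)); last by lia.
  rewrite step; last by lia.
  by rewrite -e IH //; apply: ltnW.
have S1 : S 1%N = (AX Aset)%:R.
  rewrite /S (eq_bigr (fun x => q0 x * (AX Aset)%:R)).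
    by rewrite -big_distrl /= Hq0.2 mul1r.
  move=> x /eqP Hx; rewrite /r /pstar_reach !reach1 // /pstar0.
  rewrite -[At x]/((Atau Aset par x)%:R).
  have hn := At_neq0 x; rewrite /At in hn.
  set a := (Atau Aset par x)%:R in hn *.
  rewrite invf_div.
  transitivity (a * a^-1 * (q0 x * (AX Aset)%:R)); first by ring.
  by rewrite mulfV // mul1r.
have Sall h : (1 <= h <= H.+1)%N -> S h = \sum_(h <= i < H.+1) T i.
  move=> /andP [h1 h2].
  have := Ssum (H.+1 - h)%N; rewrite (_ : (H.+1 - (H.+1 - h))%N = h); last by lia.
  by apply; lia.
have r_ge0 x : 0 <= r x.
  apply: divr_ge0.
    apply: path_prob_ge0.
      by move=> y /eqP; rewrite Hroot => /eqP; apply: Hq0.1.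
    move=> y z a E; have [Ha Hy] := Hpar _ _ _ E.
    apply: ((Hq z a _ Ha).1 y E); have := HlH y; lia.
  apply: path_prob_ge0.
    by move=> y _; rewrite /pstar0 divr_ge0 ?ler0n.
  by move=> y z a _; rewrite /pstar divr_ge0 ?ler0n ?sumr_ge0 // => ? _; rewrite ler0n.
split.
  rewrite -S1 Sall //; lia.
move=> A HA h /andP [h1 h2].
have Ab x : A%:R ^+ (H - lvl x).+1 <= At x.
  suff: forall n x, (H - lvl x)%N = n -> A%:R ^+ n.+1 <= At x by apply.
  elim=> [|n IH] {}x Hn.
    by rewrite expr1 -(HA x) At_ge.
  have Hx : (lvl x < H)%N by lia.
  apply: le_trans (_ : \sum_(c | omap fst (par c) == Some x) At c <= At x); last first.
    by rewrite [leRHS]AtE lerDr ler0n.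
  rewrite chA.
  apply: le_trans (_ : \sum_(a in Aset x) A%:R ^+ n.+1 <= _).
    by rewrite sumr_const -(HA x) /nA exprS mulr_natl.
  apply: ler_sum => a Ha.
  have [c Ec] := Hchild x a Hx Ha.
  rewrite (bigD1 c) /=; last by rewrite Ec.
  apply: le_trans (_ : At c <= _); last by rewrite lerDl sumr_ge0 // => ? _; rewrite ler0n.
  apply: IH; have := Hp _ _ _ Ec; lia.
apply: le_trans (_ : A%:R ^- (H - h) * S h <= _).
  rewrite /S mulr_sumr; apply: ler_sum => x /eqP Hx.
  rewrite (mulrA (A%:R ^- _)); apply: (ler_wpM2r (r_ge0 x)).
  have A1 : (0 < A)%N by rewrite -(HA x).
  have Ap : 0 < A%:R ^+ (H - h) :> R by rewrite exprn_gt0 // ltr0n.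
  rewrite mulrC ler_pdivlMr //.
  by apply: le_trans (Ab x); rewrite HA -exprS Hx.
rewrite ler_wpM2l //; first by rewrite invr_ge0 exprn_ge0 // ler0n.
rewrite -S1 Sall ?(Sall 1%N) //; try lia.
rewrite [X in _ <= X](big_cat_nat (n := h)) /=; [|done|lia]. rewrite lerDr.
by apply: sumr_ge0 => i _; rewrite /T sumr_ge0 // => x _; rewrite mulr_ge0 ?ler0n.
Qed.
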